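(* Let $h_1,\dots,h_{n-k}$ be the generators of a valid rate-$k/n$ quantum convolutional code and suppose its memory commutativity matrix $\Omega$ has full rank over $\mathbb{F}_2$. Let $m=\dim(\Omega)-\frac12\mathrm{rank}(\Omega)$, let $g_{i,j}$ be $m$-qubit Pauli operators with $g_{i,j}\odot g_{i',j'}=[\Omega]_{(i,j),(i',j')}$, and let $U$ be any Clifford unitary on $m+n$ qubits implementing the encoding transformation with these memory operators. Then $U$ is non-catastrophic.
   Context: Pauli operators are considered up to phase; $A\odot B\in\{0,1\}$ is $1$ iff $A,B$ anticommute, additive mod 2 over tensor factors. The weight of a Pauli operator is its number of non-identity tensor factors. A rate-$k/n$ quantum convolutional code is given by $n-k$ generators $h_i=(h_{i,1}|\cdots|h_{i,l_i})$ of $n$-qubit Pauli operators (frames of $n$ qubits) and all their frame shifts; it is valid if all these pairwise commute, i.e. $\sum_r h_{i,r+t}\odot h_{i',r}=0$ for all $i,i',t$ (with $h_{i,j}=I^{\otimes n}$ outside $1\le j\le l_i$). Encoding transformation: a Clifford unitary $U$ acting on $m$ memory, $n-k$ ancilla and $k$ information qubits and outputting $n$ physical and $m$ memory qubits implements it if, for each $1\le i\le n-k$ and $0\le j\le l_i-1$, $U$ maps $g_{i,j}\otimes A_{i,j}\otimes I^{\otimes k}$ to $h_{i,j+1}\otimes g_{i,j+1}$ (up to phase), where $g_{i,0}=g_{i,l_i}=I^{\otimes m}$, $A_{i,0}=Z_i$ (Pauli $Z$ on the $i$-th ancilla), $A_{i,j}=I^{\otimes(n-k)}$ for $j\ge1$,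 and $g_{i,j}$ ($1\le j\le l_i-1$) are $m$-qubit Pauli operators. Memory commutativity matrix $\Omega$: the symmetric binary matrix indexed by $(i,j)$, $1\le i\le n-k$, $1\le j\le l_i-1$, with entries $g_{i,j}\odot g_{i',j'}$, which are forced by consistency of commutation relations and equal, for $j\ge j'$, $\sum_{r\ge1}h_{i,j+r}\odot h_{i',j'+r}$; $\dim(\Omega)$ is its number of rows. State diagram of $U$: a directed multigraph whose vertices are the $m$-qubit Pauli operators (memory states); there is an edge from $M$ to $M'$ labeled $(L,P)$ whenever $U$ maps $M\otimes S^z\otimes L$ to $P\otimes M'$ for some $S^z\in\{I,Z\}^{\otimes(n-k)}$ on the ancillas, $k$-qubit Pauli $L$ on the information qubits and $n$-qubit Pauli $P$ on the physical qubits. The physical (logical) weight of the edge is the weight of $P$ (of $L$). $U$ is catastrophic if its state diagram has a cycle all of whose edges have zero physical weight and at least one edge has nonzero logical weight; otherwise it is non-catastrophic. *)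

(* Defs.v *)
From mathcomp Require Import all_boot all_order all_algebra.
Set Implicit Arguments. Unset Strict Implicit. Unset Printing Implicit Defensive.
Import GRing.Theory.

(* Pauli operators up to phase on a finite set T of qubits, in binary
   symplectic form: each qubit carries (x-bit, z-bit);
   I = (false,false), X = (true,false), Z = (false,true), Y = (true,true). *)
Definition Pauli (T : finType) := {ffun T -> bool * bool}.

Definition pid (T : finType) : Pauli T := [ffun _ => (false, false)].

Definition pmul (T : finType) (P Q : Pauli T) : Pauli T :=
  [ffun q => ((P q).1 (+) (Q q).1, (P q).2 (+) (Q q).2)].

Definition pZ (T : finType) (i : T) : Pauli T := [ffun q => (false, q == i)].

(* A (.) B : true iff A and B anticommute (additive mod 2 over factors) *)
Definition sp (T : finType) (P Q : Pauli T) : bool :=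
  \big[addb/false]_(q : T) (((P q).1 && (Q q).2) (+) ((P q).2 && (Q q).1)).

Definition weight (T : finType) (P : Pauli T) : nat :=
  #|[set q | P q != (false, false)]|.

Definition tensor (T1 T2 : finType) (P : Pauli T1) (Q : Pauli T2)
  : Pauli (T1 + T2)%type :=
  [ffun s => match s with inl a => P a | inr b => Q b end].

(* A Clifford unitary, considered up to phase, acting on Paulis by
   conjugation: a bijective map on Paulis preserving products and
   commutation relations (i.e. a symplectic automorphism). *)
Definition clifford (TI TO : finType) (U : Pauli TI -> Pauli TO) : Prop :=
  [/\ bijective U,
      (forall P Q, U (pmul P Q) = pmul (U P) (U Q)) &
      (forall P Q, sp (U P) (U Q) = sp P Q)].

(* Generators h i = (h i 1 | ... | h i (l i)), i : 'I_(n-k), each frame an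
   n-qubit Pauli; h i j for j = 0 or j > l i is the identity. *)
Definition valid_code (n k : nat) (l : 'I_(n - k) -> nat)
  (h : 'I_(n - k) -> nat -> Pauli 'I_n) : Prop :=
  [/\ (forall i, 0 < l i),
      (forall i j, (j == 0) || (l i < j) -> h i j = pid _) &
      (forall i i' t,
         \big[addb/false]_(0 <= r < (l i').+1) sp (h i (r + t)) (h i' r)
         = false)].

Definition omega_sum (n k : nat) (l : 'I_(n - k) -> nat)
  (h : 'I_(n - k) -> nat -> Pauli 'I_n) (i : 'I_(n - k)) (j : nat)
  (i' : 'I_(n - k)) (j' : nat) : bool :=
  \big[addb/false]_(1 <= r < (l i + l i').+1) sp (h i (j + r)) (h i' (j' + r)).

Definition omega_entry (n k : nat) (l : 'I_(n - k) -> nat)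
  (h : 'I_(n - k) -> nat -> Pauli 'I_n) (i : 'I_(n - k)) (j : nat)
  (i' : 'I_(n - k)) (j' : nat) : bool :=
  if j' <= j then omega_sum l h i j i' j' else omega_sum l h i' j' i j.

Definition memidx (n k : nat) (l : 'I_(n - k) -> nat) :=
  {p : 'I_(n - k) * 'I_(\max_(i : 'I_(n - k)) l i) | (0 < p.2) && (p.2 < l p.1)}.

Definition dimOmega (n k : nat) (l : 'I_(n - k) -> nat) : nat := #|{: memidx l}|.

Definition Omega (n k : nat) (l : 'I_(n - k) -> nat)
  (h : 'I_(n - k) -> nat -> Pauli 'I_n) : 'M['F_2]_(dimOmega l) :=
  \matrix_(a, b)
    ((omega_entry l h (val (@enum_val _ {: memidx l} a)).1 (val (@enum_val _ {: memidx l} a)).2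
                     (val (@enum_val _ {: memidx l} b)).1 (val (@enum_val _ {: memidx l} b)).2)%:R)%R.

Definition memory_ops (n k m : nat) (l : 'I_(n - k) -> nat)
  (h : 'I_(n - k) -> nat -> Pauli 'I_n) (g : 'I_(n - k) -> nat -> Pauli 'I_m)
  : Prop :=
  [/\ (forall i, g i 0 = pid _), (forall i, g i (l i) = pid _) &
      (forall i j i' j', 0 < j < l i -> 0 < j' < l i' ->
         sp (g i j) (g i' j') = omega_entry l h i j i' j')].

(* Input qubits: (memory 'I_m + ancillas 'I_(n-k)) + information 'I_k;
   output qubits: physical 'I_n + memory 'I_m. *)
Definition encodes (n k m : nat) (l : 'I_(n - k) -> nat)
  (h : 'I_(n - k) -> nat -> Pauli 'I_n) (g : 'I_(n - k) -> nat -> Pauli 'I_m)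
  (U : Pauli (('I_m + 'I_(n - k)) + 'I_k)%type -> Pauli ('I_n + 'I_m)%type)
  : Prop :=
  forall i j, j < l i ->
    U (tensor (tensor (g i j) (if j == 0 then pZ i else pid _)) (pid _))
    = tensor (h i j.+1) (g i j.+1).

Definition zonly (T : finType) (S : Pauli T) : Prop := forall q, (S q).1 = false.

Definition sd_edge (n k m : nat)
  (U : Pauli (('I_m + 'I_(n - k)) + 'I_k)%type -> Pauli ('I_n + 'I_m)%type)
  (M M' : Pauli 'I_m) (L : Pauli 'I_k) (P : Pauli 'I_n) : Prop :=
  exists S : Pauli 'I_(n - k), zonly S /\ U (tensor (tensor M S) L) = tensor P M'.

Definition catastrophic (n k m : nat)
  (U : Pauli (('I_m + 'I_(n - k)) + 'I_k)%type -> Pauli ('I_n + 'I_m)%type)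
  : Prop :=
  exists (len : nat) (Ms : nat -> Pauli 'I_m) (Ls : nat -> Pauli 'I_k)
         (Ps : nat -> Pauli 'I_n),
    [/\ 0 < len, Ms len = Ms 0,
        (forall t, t < len -> sd_edge U (Ms t) (Ms t.+1) (Ls t) (Ps t)),
        (forall t, t < len -> weight (Ps t) = 0) &
        (exists2 t, t < len & weight (Ls t) != 0)].

(* Main.v *)
Require Import Defs.
From mathcomp Require Import all_boot all_order all_algebra.
From mathcomp Require Import zify.
Set Implicit Arguments. Unset Strict Implicit. Unset Printing Implicit Defensive.
Import GRing.Theory Num.Theory.
Local Open Scope ring_scope.

Lemma F2_add (a b : bool) : ((a (+) b)%:R : 'F_2) = a%:R + b%:R.
Proof. by case: a; case: b => //=; rewrite ?add0r ?addr0 //; apply/val_inj. Qed.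

Lemma F2_mul (a b : bool) : ((a && b)%:R : 'F_2) = a%:R * b%:R.
Proof. by case: a; case: b => /=; rewrite ?mul0r ?mulr0 ?mul1r. Qed.

Lemma F2_sum (I : Type) (r : seq I) (P : pred I) (F : I -> bool) :
  ((\big[addb/false]_(i <- r | P i) F i)%:R : 'F_2) = \sum_(i <- r | P i) (F i)%:R.
Proof.
by apply: (big_morph (fun b : bool => (b%:R : 'F_2))) => // a b; rewrite F2_add.
Qed.

Lemma F2_eq0 (b : bool) : ((b%:R : 'F_2) == 0) = ~~ b.
Proof. by case: b; rewrite ?oner_eq0 ?eqxx. Qed.

Definition xv m (P : Pauli 'I_m) : 'rV['F_2]_m := \row_i ((P i).1)%:R.
Definition zv m (P : Pauli 'I_m) : 'rV['F_2]_m := \row_i ((P i).2)%:R.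
Definition vec m (P : Pauli 'I_m) : 'rV['F_2]_(m + m) := row_mx (xv P) (zv P).
Definition J2 m : 'M['F_2]_(m + m) := block_mx 0 1%:M 1%:M 0.

Lemma spF m (P Q : Pauli 'I_m) : (vec P *m J2 m *m (vec Q)^T) 0 0 = (sp P Q)%:R.
Proof.
rewrite /vec /J2 mul_row_block !mulmx0 !mulmx1 !add0r addr0 tr_row_mx mul_row_col.
rewrite /sp F2_sum addrC !mxE. idtac.
under [RHS]eq_bigr do rewrite F2_add.
rewrite big_split /=.
by congr (_ + _); apply: eq_bigr => i _; rewrite !mxE F2_mul.
Qed.

Definition bits m (P : Pauli 'I_m) (q : 'I_(m + m)) : bool :=
  match split q with inl i => (P i).1 | inr i => (P i).2 end.

Lemma vecE m (P : Pauli 'I_m) q : vec P 0 q = (bits P q)%:R.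
Proof. by rewrite /vec /bits mxE; case: split => i; rewrite mxE. Qed.

Lemma J2J2 m : J2 m *m J2 m = 1%:M.
Proof.
by rewrite /J2 mulmx_block !mulmx0 !mul0mx !mulmx1 !addr0 !add0r scalar_mx_block.
Qed.

Lemma vec0 m (M : Pauli 'I_m) : vec M = 0 -> M = pid _.
Proof.
move=> H; apply/ffunP => i; rewrite ffunE.
have h1 := congr1 (fun v : 'rV_(m+m) => v 0 (lshift m i)) H.
have h2 := congr1 (fun v : 'rV_(m+m) => v 0 (rshift m i)) H.
move: h1 h2; rewrite /= /vec !mxE (unsplitK (inl _ _)) (unsplitK (inr _ _)) !mxE.
case: (M i) => a b /= /eqP; rewrite F2_eq0 => /negPf -> /eqP; by rewrite F2_eq0 => /negPf ->.
Qed.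

Lemma key (D : finType) m (g : D -> Pauli 'I_m) :
  \rank (\matrix_(a, b) ((sp (g (@enum_val D {: D} a)) (g (@enum_val D {: D} b)))%:R : 'F_2))
    = #|{: D}| ->
  m = (#|{: D}| - #|{: D}| %/ 2)%N ->
  forall M, (forall a, sp M (g a) = false) -> M = pid _.
Proof.
set N := #|{: D}|; set Gram := \matrix_(a, b) _ => Hr Hm M HM.
pose Gint : 'M[int]_(N, m + m) := \matrix_(a, q) (bits (g (enum_val a)) q)%:Z.
pose f := (intmul (1 : 'F_2)).
pose G := map_mx f Gint.
pose Jint : 'M[int]_(m + m) := block_mx 0 1%:M (- 1%:M) 0.
have HJ : map_mx f Jint = J2 m.
  rewrite /Jint /J2 map_block_mx; congr block_mx; apply/matrixP => i j; rewrite !mxE //.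
  1,2: by case: (i == j); apply/val_inj.
have HrowG : forall a, row a G = vec (g (enum_val a)).
  by move=> a; apply/rowP => q; rewrite vecE !mxE.
have Hgram : Gram = G *m J2 m *m G^T.
  apply/matrixP => a b; rewrite mxE -spF -!HrowG -row_mul !mxE.
  by apply: eq_bigr => q _; rewrite !mxE.
have Heven : ~~ odd N.
  apply/negP => Hodd.
  pose B := Gint *m Jint *m Gint^T.
  have HB : map_mx f B = Gram by rewrite Hgram /B !map_mxM HJ /G map_trmx.
  have HJt : Jint^T = - Jint.
    rewrite /Jint tr_block_mx !trmx0 tr_scalar_mx linearN /= tr_scalar_mx.
    by rewrite opp_block_mx !oppr0 opprK.
  have HBt : B^T = - B.
    by rewrite /B !trmx_mul trmxK HJt mulNmx mulmxN mulmxA.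
  have Hdet : \det B = 0.
    have := det_tr B; rewrite HBt -scaleN1r detZ -signr_odd Hodd expr1 mulN1r.
    move=> H; have : \det B *+ 2 == 0 by rewrite mulr2n -{1}H addNr.
    by rewrite mulrn_eq0 => /eqP.
  have : Gram \in unitmx by rewrite -row_free_unit /row_free Hr.
  by rewrite unitmxE -HB det_map_mx Hdet rmorph0 unitr0.
have Hmm : (m + m = N)%N.
  move: Hm; rewrite divn2; have := even_halfK Heven; rewrite -muln2; lia.
have HrG : \rank G = (m + m)%N.
  apply/eqP; rewrite eqn_leq rank_leq_col /=.
  have : (\rank Gram <= \rank G)%N.
    by rewrite Hgram; exact: leq_trans (mxrankM_maxl _ _) (mxrankM_maxl _ _).
  rewrite Hr; lia.
have Hfree : row_free G^T by rewrite /row_free mxrank_tr HrG.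
have Hw : (vec M *m J2 m) *m G^T = 0.
  apply/rowP => b; rewrite [RHS]mxE.
  have -> : (vec M *m J2 m *m G^T) 0 b
      = (vec M *m J2 m *m (vec (g (enum_val b)))^T) 0 0.
    by rewrite -HrowG !mxE; apply: eq_bigr => q _; rewrite !mxE.
  by rewrite spF HM.
have Hw0 : vec M *m J2 m = 0 by apply: (row_free_inj Hfree); rewrite Hw mul0mx.
apply: vec0.
by rewrite -[vec M]mulmx1 -J2J2 mulmxA Hw0 mul0mx.
Qed.
Local Close Scope ring_scope.

Lemma sp_tensor (T1 T2 : finType) (A C : Pauli T1) (B D : Pauli T2) :
  sp (tensor A B) (tensor C D) = sp A C (+) sp B D.
Proof.
rewrite /sp big_sumType; congr addb; apply: eq_bigr => q _; by rewrite !ffunE.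
Qed.

Lemma sp_pidr (T : finType) (P : Pauli T) : sp P (pid T) = false.
Proof. by rewrite /sp big1 // => q _; rewrite ffunE /= !andbF. Qed.

Lemma sp_pidl (T : finType) (P : Pauli T) : sp (pid T) P = false.
Proof. by rewrite /sp big1 // => q _; rewrite ffunE. Qed.

Lemma sp_zz (T : finType) (S A : Pauli T) :
  zonly S -> (forall q, (A q).1 = false) -> sp S A = false.
Proof. by move=> HS HA; rewrite /sp big1 // => q _; rewrite HS HA andbF. Qed.

Lemma weight0 (T : finType) (P : Pauli T) : weight P = 0 -> P = pid T.
Proof.
move=> /eqP; rewrite /weight cards_eq0 => /eqP H.
apply/ffunP => q; rewrite ffunE; apply/eqP; apply: contraT => Hq.
have : q \in [set q | P q != (false, false)] by rewrite inE.
by rewrite H inE.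
Qed.

Lemma weight_pid (T : finType) : weight (pid T) = 0.
Proof.
apply/eqP; rewrite /weight cards_eq0; apply/eqP/setP => q.
by rewrite !inE ffunE eqxx.
Qed.

Lemma tensor_pid (T1 T2 : finType) : tensor (pid T1) (pid T2) = pid _.
Proof. by apply/ffunP => -[q|q]; rewrite !ffunE. Qed.

Lemma U_pid (TI TO : finType) (U : Pauli TI -> Pauli TO) :
  clifford U -> U (pid _) = pid _.
Proof.
case=> _ Hm _.
have E : forall T : finType, pid T = pmul (pid T) (pid T).
  by move=> T; apply/ffunP => q; rewrite !ffunE.
rewrite {1}E Hm; apply/ffunP => q; rewrite !ffunE.
by case: (U (pid TI) q) => a b /=; rewrite !addbb.
Qed.

Theorem theorem3 (n k : nat) (l : 'I_(n - k) -> nat)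
  (h : 'I_(n - k) -> nat -> Pauli 'I_n) (m : nat)
  (g : 'I_(n - k) -> nat -> Pauli 'I_m)
  (U : Pauli (('I_m + 'I_(n - k)) + 'I_k)%type -> Pauli ('I_n + 'I_m)%type) :
  k <= n ->
  valid_code l h ->
  \rank (Omega l h) = dimOmega l ->
  m = dimOmega l - (\rank (Omega l h)) %/ 2 ->
  memory_ops l h g ->
  clifford U ->
  encodes l h g U ->
  ~ catastrophic U.
Proof.
move=> _ _ Hr Hm [g0 gl gsp] HU0 Henc.
have UpU := U_pid HU0.
case: HU0 => [[Ui UK KU] Umul Usp].
move=> [len [Ms [Ls [Ps [Hlen Hcyc Hedge Hw [t0 Ht0 HL]]]]]].
pose M' t := Ms (t %% len).
have HP : forall t, t < len -> Ps t = pid _ by move=> t Ht; apply: weight0; apply: Hw.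
have Hstep : forall t i j, j < l i -> sp (M' t) (g i j) = sp (M' t.+1) (g i j.+1).
  move=> t i j Hj; have Ht : t %% len < len by rewrite ltn_pmod.
  have [S [HS HU]] := Hedge _ Ht.
  have := Usp (tensor (tensor (Ms (t %% len)) S) (Ls (t %% len)))
              (tensor (tensor (g i j) (if j == 0 then pZ i else pid _)) (pid _)).
  have HA : forall q, ((if j == 0 then pZ i else pid _) q).1 = false.
    by case: (j == 0) => q; rewrite ffunE.
  rewrite HU Henc // HP // !sp_tensor sp_pidl sp_pidr (sp_zz HS HA).
  rewrite /= !addbF => E.
  have -> : M' t.+1 = Ms (t %% len).+1.
    rewrite /M' -addn1 -modnDml addn1.
    case: (ltngtP (t %% len).+1 len) => H.
    - by rewrite modn_small.
    - by move: H; rewrite ltnNge Ht.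
    - by rewrite H modnn Hcyc.
  by rewrite E.
have Hzero : forall d t i j, (l i - j)%N = d -> j <= l i -> sp (M' t) (g i j) = false.
  elim => [|d IH] t i j Hd Hj.
  - have -> : j = l i by lia.
    by rewrite gl sp_pidr.
  - have Hj' : j < l i by lia.
    rewrite Hstep //; apply: IH; lia.
have HM0 : forall t, M' t = pid _.
  move=> t.
  have K := @key (memidx l) m (fun a => g (val a).1 (val a).2).
  refine (K _ _ (M' t) _).
  - rewrite -[RHS]Hr; apply: congr1; apply/matrixP => a b; rewrite !mxE.
    by rewrite gsp ?(valP (enum_val a)) ?(valP (enum_val b)).
  - by rewrite Hm Hr.
  - move=> [[i j] /= /andP[H1 H2]]; apply: (Hzero _ _ _ _ erefl); lia.
have [S [HS HU]] := Hedge _ Ht0.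
have HMt : Ms t0 = pid _ by have := HM0 t0; rewrite /M' modn_small.
have HMt1 : Ms t0.+1 = pid _.
  case: (ltngtP t0.+1 len) => H.
  - by have := HM0 t0.+1; rewrite /M' modn_small.
  - by move: H; rewrite ltnNge Ht0.
  - by rewrite H Hcyc; have := HM0 0; rewrite /M' mod0n.
move: HU; rewrite HMt HMt1 HP // tensor_pid -UpU => /(can_inj UK) HE.
have HL0 : Ls t0 = pid _.
  apply/ffunP => q; have := congr1 (fun F : Pauli (('I_m + 'I_(n - k)) + 'I_k)%type => F (inr q)) HE; by rewrite !ffunE.
by move: HL; rewrite HL0 weight_pid.
Qed.
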